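(* Let $\mathcal P=\{P_1,\dots,P_K\}$ be a finite collection of prototiles, with $P_k=\{0=p_{k,1}<p_{k,2}<\dots<p_{k,\ell_k}\}$. Then the subscripted tiling system $\widetilde T(\mathcal P)$ is a shift of finite type. More precisely, if $L$ is the maximal length $p_{k,\ell_k}+1$ of a prototile in $\mathcal P$, then a point $x\in\prod_{i\in\mathbb Z}\{(k,\ell):1\le k\le K,1\le \ell\le \ell_k\}$ belongs to $\widetilde T(\mathcal P)$ whenever every block of $L$ consecutive symbols occurring in $x$ occurs in some point of $\widetilde T(\mathcal P)$.
   Context: A prototile is a finite nonempty subset of $\mathbb Z$ with minimum $0$. The subscripted tiling system $\widetilde T(\mathcal P)$ is the set of points $x\in\prod_{i\in\mathbb Z}\{(k,\ell):1\le k\le K,\ 1\le\ell\le\ell_k\}$ such that there is a tiling $\mathbb Z=\bigcup_j(t_j+P_{k_j})$ of $\mathbb Z$ as a disjoint union of translates of prototiles with the property that for every $i$ there are $j$ and $\ell$ with $i\in t_j+P_{k_j}$ (namely $i=t_j+p_{k_j,\ell}$) and $x_i=(k_j,\ell)$. Equivalently, $x\in\widetilde T(\mathcal P)$ iff for every $i$, $x_i=(k,\ell)$ and $1\le\ell'\le\ell_k$ imply $x_{i+p_{k,\ell'}-p_{k,\ell}}=(k,\ell')$. It is considered with the shift $(\sigma x)_i=x_{i+1}$. *)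

(* Defs.v *)
From mathcomp Require Import all_boot all_order all_algebra.
Set Implicit Arguments. Unset Strict Implicit. Unset Printing Implicit Defensive.
Import Order.TTheory GRing.Theory Num.Theory.
Local Open Scope ring_scope.

(* Prototiles P_1..P_K are indexed by k : 'I_K (0-based); P k is the
   increasing list [:: p_{k,1}; ...; p_{k,l_k}] with p_{k,1} = 0.
   Symbols (k,l) use 0-based l : l < size (P k). *)
Definition prototiles_ok (K : nat) (P : 'I_K -> seq nat) : Prop :=
  forall k : 'I_K, [/\ P k != [::], head 1%N (P k) = 0%N & sorted ltn (P k)].

Definition in_alphabet (K : nat) (P : 'I_K -> seq nat) (a : 'I_K * nat) : Prop :=
  (a.2 < size (P a.1))%N.

Definition tile_covers (K : nat) (P : 'I_K -> seq nat) (S : 'I_K * int -> Prop)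
  (i : int) (k : 'I_K) (t : int) (l : nat) : Prop :=
  [/\ S (k, t), (l < size (P k))%N & i = t + (nth 0%N (P k) l)%:Z].

(* S (a set of tiles t + P_k, coded as pairs (k,t)) is a tiling: Z is the
   disjoint union of its tiles, i.e. every integer lies in exactly one tile. *)
Definition is_tiling (K : nat) (P : 'I_K -> seq nat) (S : 'I_K * int -> Prop) : Prop :=
  forall i : int, exists! ktl : 'I_K * int * nat,
    tile_covers P S i ktl.1.1 ktl.1.2 ktl.2.

Definition subscripted_tiling (K : nat) (P : 'I_K -> seq nat)
  (x : int -> 'I_K * nat) : Prop :=
  exists S : 'I_K * int -> Prop, is_tiling P S /\
    forall i : int, exists (k : 'I_K) (t : int) (l : nat),
      tile_covers P S i k t l /\ x i = (k, l).

Definition block (T : Type) (x : int -> T) (i : int) (n : nat) : seq T :=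
  [seq x (i + j%:Z) | j <- iota 0 n].

Definition max_len (K : nat) (P : 'I_K -> seq nat) : nat :=
  (\max_(k < K) (last 0%N (P k)).+1)%N.

Definition is_SFT (T : eqType) (A : T -> Prop) (X : (int -> T) -> Prop) : Prop :=
  exists (N : nat) (W : seq (seq T)), forall x : int -> T, (forall i, A (x i)) ->
    (X x <-> forall i : int, block x i N \in W).

(* Main.v *)
Require Import Defs.
From mathcomp Require Import all_boot all_order all_algebra.
From Stdlib Require Import Classical ClassicalEpsilon.
Import GRing.Theory Num.Theory.
Local Open Scope ring_scope.

Section Aux.
Variables (K : nat) (P : 'I_K -> seq nat).
Hypothesis okP : prototiles_ok P.

Lemma nth_bound (k : 'I_K) l : (l < size (P k))%N -> (nth 0%N (P k) l < max_len P)%N.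
Proof.
move=> hl; case: (okP k) => ne _ so.
have so' : sorted leq (P k) by apply: sub_sorted so => a b /ltnW.
have h1 : (nth 0%N (P k) l <= last 0%N (P k))%N.
  rewrite -nth_last; apply: (sorted_leq_nth leq_trans leqnn 0%N so') => //.
    by rewrite inE; case: (P k) ne => //= *.
  by rewrite -ltnS prednK //; case: (P k) ne hl.
apply: leq_trans (leq_bigmax_cond (F := fun k => (last 0%N (P k)).+1) k isT).
by rewrite ltnS.
Qed.

Lemma nth0 (k : 'I_K) : nth 0%N (P k) 0 = 0%N.
Proof. by case: (okP k); case: (P k). Qed.

Lemma size_pos (k : 'I_K) : (0 < size (P k))%N.
Proof. by case: (okP k); case: (P k). Qed.

Lemma tiling_consistent y j (k : 'I_K) l l' :
  subscripted_tiling P y -> y j = (k, l) -> (l' < size (P k))%N ->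
  y (j - (nth 0%N (P k) l)%:Z + (nth 0%N (P k) l')%:Z) = (k, l').
Proof.
move=> [S [HS Hy]] yj hl'.
have [k0 [t0 [l0 [[St0 hl0 ej] yj0]]]] := Hy j.
rewrite yj in yj0; case: yj0 => ek el; subst k0 l0.
rewrite ej addrK.
set q := t0 + _.
have [k1 [t1 [l1 [c1 yq]]]] := Hy q.
have [u [cu uu]] := HS q.
have e1 := uu ((k1, t1), l1) c1.
have e2 := uu ((k, t0), l') (And3 St0 hl' erefl).
by rewrite yq; rewrite e2 in e1; case: e1 => <- _ <-.
Qed.

Lemma block_nth (T : Type) (d : T) (x : int -> T) i n j : (j < n)%N ->
  nth d (block x i n) j = x (i + j%:Z).
Proof. by move=> hj; rewrite /block (nth_map 0%N) ?size_iota // nth_iota. Qed.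

Lemma local_global x :
  (forall i : int, in_alphabet P (x i)) ->
  (forall i : int, exists (y : int -> 'I_K * nat) (m : int),
     subscripted_tiling P y /\ block y m (max_len P) = block x i (max_len P)) ->
  subscripted_tiling P x.
Proof.
move=> Ha Hl.
have cons : forall i (k : 'I_K) l l', x i = (k, l) -> (l' < size (P k))%N ->
    x (i - (nth 0%N (P k) l)%:Z + (nth 0%N (P k) l')%:Z) = (k, l').
  move=> i k l l' xi hl'.
  have hl : (l < size (P k))%N by have := Ha i; rewrite /in_alphabet xi.
  set t := i - _.
  have [y [m [ty eb]]] := Hl t.
  have ex : forall j, (j < max_len P)%N -> x (t + j%:Z) = y (m + j%:Z).
    move=> j hj; rewrite -(@block_nth _ (x 0) x t _ _ hj) -eb block_nth //.
  have yl : y (m + (nth 0%N (P k) l)%:Z) = (k, l).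
    by rewrite -ex ?nth_bound // /t subrK.
  have := tiling_consistent _ _ _ _ _ ty yl hl'; rewrite addrK => <-.
  by rewrite -ex ?nth_bound.
exists (fun kt => x kt.2 = (kt.1, 0%N)).
have cov : forall i, exists k l, x i = (k, l) /\
    tile_covers P (fun kt => x kt.2 = (kt.1, 0%N)) i k (i - (nth 0%N (P k) l)%:Z) l.
  move=> i; case E: (x i) => [k l]; exists k, l; split => //.
  have hl : (l < size (P k))%N by have := Ha i; rewrite /in_alphabet E.
  split => //=; last by rewrite subrK.
  by have := cons i k l 0%N E (size_pos k); rewrite nth0 addr0.
split.
  move=> i; have [k [l [E c]]] := cov i.
  exists ((k, i - (nth 0%N (P k) l)%:Z), l); split => //.
  case=> [[k' t'] l'] [/= St hl' ei].
  have := cons t' k' 0%N l' St hl'; rewrite nth0 subr0 -ei E.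
  by case=> ek el; subst k' l'; rewrite ei addrK.
move=> i; have [k [l [E c]]] := cov i.
by exists k, (i - (nth 0%N (P k) l)%:Z), l.
Qed.

End Aux.

Theorem mainTheorem3 (K : nat) (P : 'I_K -> seq nat) :
  prototiles_ok P ->
  is_SFT (in_alphabet P) (subscripted_tiling P) /\
  (forall x : int -> 'I_K * nat,
     (forall i : int, in_alphabet P (x i)) ->
     (forall i : int, exists (y : int -> 'I_K * nat) (m : int),
        subscripted_tiling P y /\ block y m (max_len P) = block x i (max_len P)) ->
     subscripted_tiling P x).
Proof.
move=> okP; split; last exact: local_global.
pose A := [seq (k, l) | k <- enum 'I_K, l <- iota 0 (size (P k))].
pose fix words n := if n is n'.+1 then [seq a :: w | a <- A, w <- words n'] else [:: [::]].
have inw : forall w : seq ('I_K * nat), all (fun a : 'I_K * nat => (a.2 < size (P a.1))%N) w -> w \in words (size w).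
  elim=> [|a w IH] //= /andP [ha hw].
  have -> : a = (a.1, a.2) by case: a {ha}.
  apply: allpairs_f; last exact: IH.
  apply/allpairsPdep; exists a.1, a.2; split => //; first by rewrite mem_enum.
  by rewrite mem_iota.
pose Q (w : seq ('I_K * nat)) := exists (y : int -> 'I_K * nat) (m : int),
  subscripted_tiling P y /\ block y m (max_len P) = w.
pose q w := if excluded_middle_informative (Q w) then true else false.
exists (max_len P), [seq w <- words (max_len P) | q w].
move=> x Ha; split.
  move=> tx i; rewrite mem_filter; apply/andP; split.
    by rewrite /q; case: excluded_middle_informative => // nQ; exfalso; apply: nQ; exists x, i.
  have := inw (block x i (max_len P)); rewrite /block size_map size_iota; apply.
  by apply/allP => a /mapP [j _ ->]; apply: Ha.
move=> H; apply: local_global => // i.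
have := H i; rewrite mem_filter => /andP [].
by rewrite /q; case: excluded_middle_informative.
Qed.
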